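(* Let $n\ge 2$ and $m\in\mathbb{N}$. The sequence \[ \big(t_2^m-t_1^m,\ t_3^m-t_2^m,\ \dots,\ t_{n-1}^m-t_{n-2}^m,\ -t_1^m\cdots t_{n-2}^m\,t_{n-1}^{2m}\big) \] is a regular sequence in $\mathbb{Q}[t_1,\dots,t_{n-1}]$. *)

(* Defs.v *)
From HB Require Import structures.
From mathcomp Require Import all_boot all_order all_algebra.
From mathcomp Require Import mpoly.

Set Implicit Arguments.
Unset Strict Implicit.
Unset Printing Implicit Defensive.

Import GRing.Theory.
Local Open Scope ring_scope.

Definition in_ideal (R : comNzRingType) (s : seq R) (g : R) : Prop :=
  exists c : seq R, size c = size s /\ g = \sum_(i < size s) c`_i * s`_i.

(* Regular sequence (s_1,...,s_r) in R: each s_i is a non-zero-divisor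
   on R/(s_1,...,s_{i-1}), and R/(s_1,...,s_r) <> 0. *)
Definition regular_seq (R : comNzRingType) (s : seq R) : Prop :=
  (forall i : nat, (i < size s)%N ->
     forall g : R, in_ideal (take i s) (s`_i * g) -> in_ideal (take i s) g)
  /\ ~ in_ideal s 1.

(* tvar k i = the variable t_{i+1} of Q[t_1,...,t_k] (0-indexed), 0 if i >= k *)
Definition tvar (k i : nat) : {mpoly rat[k]} :=
  match (insub i : option 'I_k) with Some j => 'X_j | None => 0 end.

Definition lemma_seq (n m : nat) : seq {mpoly rat[n.-1]} :=
  [seq tvar n.-1 i.+1 ^+ m - tvar n.-1 i ^+ m | i <- iota 0 (n - 2)] ++
  [:: - ((\prod_(i < n - 2) tvar n.-1 i ^+ m) * tvar n.-1 (n - 2) ^+ (2 * m))].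

(* Main.v *)
Require Import Defs.
From mathcomp Require Import all_boot all_order all_algebra.
From mathcomp Require Import mpoly.
Set Implicit Arguments.
Unset Strict Implicit.
Unset Printing Implicit Defensive.
Import GRing.Theory.
Local Open Scope ring_scope.

Section Ideal.
Variable B : comNzRingType.
Implicit Types (s t : seq B) (g h : B).

Definition idl s g := exists c : nat -> B, g = \sum_(i < size s) c i * s`_i.

Lemma idlE s g : in_ideal s g <-> idl s g.
Proof.
split=> [[c [_ ->]]|[c ->]]; first by exists (fun i => c`_i).
exists (mkseq c (size s)); rewrite size_mkseq; split=> //.
by apply: eq_bigr => i _; rewrite nth_mkseq.
Qed.

Lemma idl0 s : idl s 0.
Proof. by exists (fun _ => 0); rewrite big1 // => i _; rewrite mul0r. Qed.

Lemma idlD s g h : idl s g -> idl s h -> idl s (g + h).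
Proof.
move=> [c ->] [d ->]; exists (fun i => c i + d i).
by rewrite -big_split; apply: eq_bigr => i _; rewrite mulrDl.
Qed.

Lemma idlM s a g : idl s g -> idl s (a * g).
Proof.
move=> [c ->]; exists (fun i => a * c i).
by rewrite mulr_sumr; apply: eq_bigr => i _; rewrite mulrA.
Qed.

Lemma idlMr s a g : idl s g -> idl s (g * a).
Proof. by move=> H; rewrite mulrC; apply: idlM. Qed.

Lemma idlN s g : idl s g -> idl s (- g).
Proof. by move=> H; rewrite -mulN1r; apply: idlM. Qed.

Lemma idlB s g h : idl s g -> idl s h -> idl s (g - h).
Proof. by move=> ? ?; apply: idlD => //; apply: idlN. Qed.

Lemma idl_sum s (I : Type) (r : seq I) (F : I -> B) :
  (forall i, idl s (F i)) -> idl s (\sum_(i <- r) F i).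
Proof.
move=> H; elim: r => [|x r IH]; first by rewrite big_nil; apply: idl0.
by rewrite big_cons; apply: idlD.
Qed.

Lemma idl_gen s i : (i < size s)%N -> idl s s`_i.
Proof.
move=> lt; exists (fun j => (j == i)%:R).
rewrite (bigD1 (Ordinal lt)) //= eqxx mul1r big1 ?addr0 // => j.
by rewrite -val_eqE /= => /negbTE ->; rewrite mul0r.
Qed.

Lemma idl_sub s t g : (forall i, (i < size s)%N -> idl t s`_i) ->
  idl s g -> idl t g.
Proof.
move=> H [c ->]; apply: idl_sum => i; apply: idlM; exact: H.
Qed.

Lemma idl_rcons s f g : idl (rcons s f) g <->
  exists q c, idl s q /\ g = q + c * f.
Proof.
split.
  move=> [c ->]; rewrite size_rcons big_ord_recr /= nth_rcons ltnn eqxx.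
  exists (\sum_(i < size s) c i * (rcons s f)`_i), (c (size s)); split=> //.
  exists c; apply: eq_bigr => i _; rewrite nth_rcons ltn_ord //.
move=> [q [c [[d ->] ->]]].
exists (fun i => if i == size s then c else d i).
rewrite size_rcons big_ord_recr /= nth_rcons ltnn !eqxx; congr (_ + _).
apply: eq_bigr => i _; rewrite nth_rcons ltn_ord ltn_eqF //.
Qed.

Lemma idl_rcons_l s f g : idl s g -> idl (rcons s f) g.
Proof. by move=> H; apply/idl_rcons; exists g, 0; rewrite mul0r addr0. Qed.

Lemma idl_rcons_f s f : idl (rcons s f) f.
Proof. by apply/idl_rcons; exists 0, 1; rewrite mul1r add0r; split=> //; apply: idl0. Qed.

Lemma idl_nil g : idl [::] g <-> g = 0.
Proof. by split=> [[c ->]|->]; [rewrite big_ord0 | apply: idl0]. Qed.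

Definition nzd s h := forall g, idl s (h * g) -> idl s g.

Lemma nzd1 s : nzd s 1.
Proof. by move=> g; rewrite mul1r. Qed.

Lemma nzdN1 s : nzd s (-1).
Proof. by move=> g; rewrite mulN1r => /idlN; rewrite opprK. Qed.

Lemma nzdM s u w : nzd s u -> nzd s w -> nzd s (u * w).
Proof. by move=> Hu Hw g; rewrite -mulrA => /Hu /Hw. Qed.

Lemma nzdX s u e : nzd s u -> nzd s (u ^+ e).
Proof.
move=> Hu; elim: e => [|e IH]; first by rewrite expr0; apply: nzd1.
by rewrite exprS; apply: nzdM.
Qed.

Lemma nzd_prod s (I : Type) (r : seq I) (F : I -> B) :
  (forall i, nzd s (F i)) -> nzd s (\prod_(i <- r) F i).
Proof.
move=> H; elim: r => [|x r IH]; first by rewrite big_nil; apply: nzd1.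
by rewrite big_cons; apply: nzdM.
Qed.

End Ideal.

Section Coef.
Variable B : comNzRingType.
Variable phi : {rmorphism B -> {poly B}}.
Variable x : B.
Hypothesis phiX : phi x = 'X.
Hypothesis phiK : forall g, (phi g).[x] = g.
Definition VF a := phi a = a%:P.

Lemma coef_idl s g : (forall i, (i < size s)%N -> VF s`_i) -> idl s g ->
  forall e, idl s (phi g)`_e.
Proof.
move=> H [c ->] e; rewrite rmorph_sum coef_sum; apply: idl_sum => i.
by rewrite rmorphM H // coefMC; apply: idlM; apply: idl_gen.
Qed.

Lemma idl_coef s g : (forall e, idl s (phi g)`_e) -> idl s g.
Proof.
move=> H; rewrite -[g]phiK horner_coef; apply: idl_sum => i.
exact: idlMr.
Qed.

Lemma nzd_monic s a m : (0 < m)%N -> VF a ->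
  (forall i, (i < size s)%N -> VF s`_i) -> nzd s (x ^+ m - a).
Proof.
move=> m0 Ha Hs g H; apply: idl_coef => e.
set G := phi g.
have HC e' : idl s (phi ((x ^+ m - a) * g))`_e' by apply: coef_idl.
have E e' : (phi ((x ^+ m - a) * g))`_(e' + m) = G`_e' - a * G`_(e' + m).
  rewrite rmorphM rmorphB rmorphXn phiX Ha mulrBl coefB coefXnM coefCM.
  by rewrite ltnNge leq_addl /= addnK || (rewrite ltnNge leq_addl; rewrite /= addnK).
suff: forall d e, (size G <= e + d)%N -> idl s G`_e.
  by move=> H'; apply: (H' (size G)); rewrite leq_addl.
elim=> [|d IH] e1 le.
  by rewrite addn0 in le; rewrite nth_default //; apply: idl0.
have -> : G`_e1 = (phi ((x ^+ m - a) * g))`_(e1 + m) + a * G`_(e1 + m).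
  by rewrite E subrK.
apply: idlD; first exact: HC.
apply: idlM; apply: IH.
by apply: leq_trans le _; rewrite -addnA leq_add2l addnC -addn1 leq_add2l.
Qed.

Lemma nzd_ext (s : seq B) (a h : B) (m : nat) : (0 < m)%N -> VF a -> VF h ->
  (forall i, (i < size s)%N -> VF s`_i) -> nzd s h ->
  nzd (rcons s (x ^+ m - a)) h.
Proof.
move=> m0 Ha Hh Hs Hn g /idl_rcons [q [c [Hq E]]].
set f := x ^+ m - a in E *.
have Hc : idl (rcons s h) c.
  apply: (@nzd_monic (rcons s h) a m) => //.
    move=> i; rewrite size_rcons ltnS leq_eqVlt nth_rcons.
    case/orP=> [/eqP ->|lt]; first by rewrite ltnn eqxx.
    by rewrite lt; apply: Hs.
  have -> : f * c = h * g - q by rewrite E mulrC addrC addKr.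
  apply: idlB; first by apply: idlMr; apply: idl_rcons_f.
  exact: idl_rcons_l.
move: Hc => /idl_rcons [q' [c' [Hq' Ec]]].
apply/idl_rcons; exists (g - c' * f), c'; split; last by rewrite subrK.
apply: Hn.
have -> : h * (g - c' * f) = q + q' * f by rewrite mulrBr E Ec mulrDl -mulrA [h * (c' * f)]mulrCA addrA addrK.
by apply: idlD => //; apply: idlMr.
Qed.

End Coef.

Section MP.
Variable k : nat.
Local Notation B := {mpoly rat[k]}.
Variable v : 'I_k.
Definition hv (i : 'I_k) : {poly B} := if i == v then 'X else ('X_i)%:P.
Definition phiv := mmap (polyC \o (@mpolyC k rat)) hv.
Lemma phivX : phiv 'X_v = 'X.
Proof. by rewrite /phiv mmapX mmap1U /hv eqxx. Qed.
Lemma phivXi i : i != v -> phiv 'X_i = ('X_i)%:P.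
Proof. by move=> /negbTE H; rewrite /phiv mmapX mmap1U /hv H. Qed.
Lemma phivK g : (phiv g).['X_v] = g.
Proof.
rewrite -horner_evalE /phiv /mmap rmorph_sum /= [RHS]mpolyE.
apply: eq_bigr => m _.
rewrite rmorphM /= rmorph_prod /= horner_evalE hornerC (@mpolyXE_id _ _ m) mul_mpolyC.
congr (_ *: _); apply: eq_bigr => i _.
rewrite rmorphXn /= horner_evalE /hv; case: eqP => [->|_].
  by rewrite hornerX.
by rewrite hornerC.
Qed.

Lemma tvarE j (h : (j < k)%N) : tvar k j = 'X_(Ordinal h).
Proof. by rewrite /tvar insubT. Qed.

Lemma tvar_oob j : (k <= j)%N -> tvar k j = 0.
Proof. by move=> h; rewrite /tvar insubF // ltnNge h. Qed.

Lemma VF_tvar j : j != v :> nat -> VF phiv (tvar k j).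
Proof.
move=> jv; rewrite /VF; case: (ltnP j k) => h.
  by rewrite tvarE; apply: phivXi; rewrite -val_eqE.
by rewrite tvar_oob // rmorph0.
Qed.

Lemma VFM a b : VF phiv a -> VF phiv b -> VF phiv (a * b).
Proof. by rewrite /VF rmorphM polyCM => -> ->. Qed.
Lemma VFB a b : VF phiv a -> VF phiv b -> VF phiv (a - b).
Proof. by rewrite /VF rmorphB polyCB => -> ->. Qed.
Lemma VFX a e : VF phiv a -> VF phiv (a ^+ e).
Proof. by rewrite /VF rmorphXn polyC_exp => ->. Qed.
End MP.

Section Main.
Variables (p m : nat).
Hypothesis hm : (1 <= m)%N.
Local Notation k := p.+1.
Local Notation B := {mpoly rat[k]}.
Local Notation x := (tvar k).
Definition F l : B := x l.+1 ^+ m - x l ^+ m.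
Definition Is r := [seq F l | l <- iota 0 r].

Lemma Is_rcons r : Is r.+1 = rcons (Is r) (F r).
Proof. by rewrite /Is -[r.+1]addn1 iotaD map_cat cats1. Qed.

Lemma Is_nth r i : (i < r)%N -> (Is r)`_i = F i.
Proof. by move=> h; rewrite /Is (nth_map 0%N) ?size_iota // nth_iota. Qed.

Lemma size_Is r : size (Is r) = r.
Proof. by rewrite size_map size_iota. Qed.

Lemma Is_VF (v : 'I_k) r : (r < v)%N ->
  forall i, (i < size (Is r))%N -> VF (phiv v) (Is r)`_i.
Proof.
move=> rv i; rewrite size_Is => ir; rewrite Is_nth //.
apply: VFB; apply: VFX; apply: VF_tvar; rewrite neq_ltn.
  by rewrite (leq_ltn_trans ir rv).
by rewrite (ltn_trans ir rv).
Qed.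

Lemma nzdA i : (i < p)%N -> nzd (Is i) (F i).
Proof.
move=> ip.
have hv : (i.+1 < k)%N by [].
pose v := Ordinal hv.
have -> : F i = 'X_v ^+ m - x i ^+ m by rewrite /F (tvarE hv).
apply: (@nzd_monic _ (phiv v) 'X_v (phivX v) (@phivK _ v)) => //.
  by apply: VFX; apply: VF_tvar; rewrite /= neq_ltn ltnSn.
by apply: Is_VF => /=.
Qed.

Lemma X_neq0 (j : 'I_k) : 'X_j != 0 :> B.
Proof.
apply/eqP => /(congr1 (mcoeff U_(j))); rewrite mcoeffX eqxx mcoeff0.
by move/eqP; rewrite oner_eq0.
Qed.

Lemma nzdN r : (r <= p)%N -> forall j, (j <= r)%N -> nzd (Is r) (x j).
Proof.
elim: r => [|r IH] rp j jr.
  move: jr; rewrite leqn0 => /eqP ->.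
  rewrite (tvarE (ltn0Sn p)) => g /idl_nil /eqP.
  by rewrite mulf_eq0 (negbTE (X_neq0 _)) /= => /eqP ->; apply/idl_nil.
have rv : (r.+1 < k)%N by [].
pose v := Ordinal rv.
have Hr : forall j, (j <= r)%N -> nzd (Is r.+1) (x j).
  move=> j' jr'; rewrite Is_rcons.
  have -> : F r = 'X_v ^+ m - x r ^+ m by rewrite /F (tvarE rv).
  apply: (@nzd_ext _ (phiv v) 'X_v (phivX v) (@phivK _ v)) => //.
  - by apply: VFX; apply: VF_tvar; rewrite /= neq_ltn ltnSn.
  - by apply: VF_tvar; rewrite /= neq_ltn ltnS jr'.
  - by apply: Is_VF => /=.
  - by apply: IH => //; apply: ltnW.
move: jr; rewrite leq_eqVlt => /orP [/eqP ->|]; last by apply: Hr.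
move=> g Hg.
have HH := (nzdX (e:=m) (Hr r (leqnn r))). apply: HH.
have -> : x r ^+ m * g = x r.+1 ^+ m.-1 * (x r.+1 * g) - F r * g.
  rewrite mulrA -exprSr prednK // /F mulrBl.
  by rewrite opprB addrC subrK.
apply: idlB; first exact: idlM.
rewrite Is_rcons; apply: idlMr; exact: idl_rcons_f.
Qed.


Definition Lst : B := - ((\prod_(i < p) x i ^+ m) * x p ^+ (2 * m)).

Lemma nzdB : nzd (Is p) Lst.
Proof.
rewrite /Lst -mulN1r; apply: nzdM; first exact: nzdN1.
apply: nzdM; last by apply: nzdX; apply: nzdN.
apply: (big_ind (nzd (Is p))); first exact: nzd1.
  by move=> a b; apply: nzdM.
by move=> i _; apply: nzdX; apply: nzdN => //; apply: ltnW.
Qed.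

Lemma meval_x j : meval (fun _ => 0) (x j) = 0.
Proof.
case: (ltnP j k) => h; first by rewrite (tvarE h) mevalXU.
by rewrite tvar_oob // rmorph0.
Qed.

Lemma meval_F j : meval (fun _ => 0) (F j) = 0.
Proof. by rewrite /F rmorphB !rmorphXn /= !meval_x subrr. Qed.

Lemma meval_L : meval (fun _ => 0) Lst = 0.
Proof.
rewrite /Lst rmorphN rmorphM rmorphXn /= meval_x expr0n.
have -> : (2 * m == 0)%N = false by rewrite muln_eq0 /=; apply/negbTE; rewrite -lt0n.
by rewrite mulr0 oppr0.
Qed.

Lemma main_reg : regular_seq (Is p ++ [:: Lst]).
Proof.
split.
  move=> i; rewrite size_cat size_Is /= addn1 ltnS => ip g.
  rewrite take_cat nth_cat size_Is !idlE.
  case: (ltnP i p) => ip'.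
    rewrite /Is -map_take take_iota (minn_idPl (ltnW ip')) -/(Is i).
    by rewrite Is_nth //; apply: nzdA.
  have -> : i = p by apply/eqP; rewrite eqn_leq ip ip'.
  by rewrite subnn take0 cats0 /=; apply: nzdB.
move/idlE => [c /(congr1 (meval (fun _ => (0 : rat))))].
rewrite rmorph1 rmorph_sum /= big1 ?oner_eq0 // => [[i hi]] _ /=.
rewrite rmorphM /= nth_cat size_Is.
case: ltnP => h; first by rewrite Is_nth // meval_F mulr0.
have -> : (i - p = 0)%N.
  by apply/eqP; rewrite subn_eq0 -ltnS; move: hi; rewrite size_cat size_Is addn1.
by rewrite /= meval_L mulr0.
Qed.
End Main.

Theorem lemma3p5 (n m : nat) (hn : (2 <= n)%N) (hm : (1 <= m)%N) :
  regular_seq (lemma_seq n m).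
Proof.
case: n hn => [|[|p]] // _.
have -> : lemma_seq p.+2 m = Is p m p ++ [:: Lst p m].
  rewrite /lemma_seq.
  have -> : (p.+2 - 2 = p)%N by rewrite subSS subSS subn0.
  reflexivity.
exact: main_reg.
Qed.
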